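(* Let $0<\upsilon<1/2$. For each $m=1,2,\dots$ let $\alpha_m,\beta_m>0$ with $\alpha_m+\beta_m=m$, and let $\mu_m$ be the truncated $\mathrm{Beta}(\alpha_m,\beta_m)$ probability measure on $[\upsilon,1-\upsilon]$, i.e., the standard $\mathrm{Beta}(\alpha_m,\beta_m)$ probability measure on $[0,1]$ restricted to $[\upsilon,1-\upsilon]$ and normalized. Let $I\subseteq[\upsilon,1-\upsilon]$ be a sub-interval containing $\theta$ in its interior. If $\left|\frac{\alpha_m}{m}-\theta\right|=\frac{o(\log m)}{\sqrt m}$ as $m\to\infty$, then $\inf_{m\ge1}\mu_m(I)>0$. *)

(* Defs.v *)
From Stdlib Require Import Reals.
From Coquelicot Require Import Coquelicot.
Open Scope R_scope.

Definition beta_density (a b x : R) : R :=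
  Rpower x (a - 1) * Rpower (1 - x) (b - 1).

(* The Beta normalising constant B(a,b) cancels in the
   ratio; the endpoints' inclusion is irrelevant (no atoms). *)
Definition trunc_beta_mass (ups a b c d : R) : R :=
  RInt (beta_density a b) c d / RInt (beta_density a b) ups (1 - ups).

(* Main.v *)
Require Import Defs.
From Stdlib Require Import Reals Lra Lia.
From Coquelicot Require Import Coquelicot.
Open Scope R_scope.

Lemma f_cont a b x : 0 < x < 1 -> continuous (beta_density a b) x.
Proof. intros Hx. apply (ex_derive_continuous (V:=R_CompleteNormedModule) (beta_density a b)). unfold beta_density, Rpower. auto_derive. lra. Qed.

Lemma chas f a b c : ex_RInt f a b -> ex_RInt f b c -> RInt f a c = RInt f a b + RInt f b c.
Proof. intros H1 H2. rewrite <- (RInt_Chasles f a b c H1 H2). reflexivity. Qed.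

Lemma rc a b c : RInt (fun _ => c) a b = (b - a) * c.
Proof. rewrite RInt_const. reflexivity. Qed.

Lemma f_int a b u v : 0 < u -> v < 1 -> u <= v -> ex_RInt (beta_density a b) u v.
Proof.
  intros. apply (ex_RInt_continuous (V:=R_CompleteNormedModule)). intros z Hz.
  rewrite Rmin_left in Hz by lra. rewrite Rmax_right in Hz by lra.
  apply f_cont. lra.
Qed.

Lemma f_pos a b x : 0 < x < 1 -> 0 < beta_density a b x.
Proof. intros. unfold beta_density, Rpower. apply Rmult_lt_0_compat; apply exp_pos. Qed.

Lemma f_exp a b x : beta_density a b x = exp ((a-1) * ln x + (b-1) * ln (1-x)).
Proof. unfold beta_density, Rpower. rewrite exp_plus. reflexivity. Qed.

Lemma ln_le1 t : 0 < t -> ln t <= t - 1.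
Proof. intros. pose proof (exp_ineq1_le (ln t)). rewrite exp_ln in H0; lra. Qed.

Lemma ln_ge1 t : 0 < t -> 1 - / t <= ln t.
Proof.
  intros. pose proof (ln_le1 (/ t) (Rinv_0_lt_compat _ H)).
  rewrite ln_Rinv in H0 by lra. lra.
Qed.

Lemma exp_mono x y : x <= y -> exp x <= exp y.
Proof. intros [H|H]. left; apply exp_increasing; auto. subst; lra. Qed.

Lemma g_incr p q x y : 0 < x -> x <= y -> y < 1 -> 0 <= p -> 0 <= q ->
  0 <= p - (p+q)*y ->
  p * ln x + q * ln (1-x) <= p * ln y + q * ln (1-y).
Proof.
  intros.
  assert (H5: (y-x)/y <= ln y - ln x).
  { rewrite <- ln_div by lra. replace ((y-x)/y) with (1 - /(y/x)) by (field; lra).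
    apply ln_ge1. apply Rdiv_lt_0_compat; lra. }
  assert (H6: ln (1-x) - ln (1-y) <= (y-x)/(1-y)).
  { rewrite <- ln_div by lra. replace ((y-x)/(1-y)) with ((1-x)/(1-y) - 1) by (field; lra).
    apply ln_le1. apply Rdiv_lt_0_compat; lra. }
  assert (H7: 0 <= p * ((y-x)/y) - q * ((y-x)/(1-y))).
  { replace (p * ((y-x)/y) - q * ((y-x)/(1-y))) with ((y-x)/(y*(1-y)) * (p - (p+q)*y)) by (field; lra).
    apply Rmult_le_pos; auto. apply Rdiv_le_0_compat. lra. apply Rmult_lt_0_compat; lra. }
  assert (p * ((y-x)/y) <= p * (ln y - ln x)) by (apply Rmult_le_compat_l; auto).
  assert (q * (ln (1-x) - ln (1-y)) <= q * ((y-x)/(1-y))) by (apply Rmult_le_compat_l; auto).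
  lra.
Qed.

Lemma g_decr p q x y : 0 < x -> x <= y -> y < 1 -> 0 <= p -> 0 <= q ->
  0 <= (p+q)*x - p ->
  p * ln y + q * ln (1-y) <= p * ln x + q * ln (1-x).
Proof.
  intros.
  assert (H5: ln y - ln x <= (y-x)/x).
  { rewrite <- ln_div by lra. replace ((y-x)/x) with (y/x - 1) by (field; lra).
    apply ln_le1. apply Rdiv_lt_0_compat; lra. }
  assert (H6: (y-x)/(1-x) <= ln (1-x) - ln (1-y)).
  { rewrite <- ln_div by lra. replace ((y-x)/(1-x)) with (1 - /((1-x)/(1-y))) by (field; lra).
    apply ln_ge1. apply Rdiv_lt_0_compat; lra. }
  assert (H7: 0 <= q * ((y-x)/(1-x)) - p * ((y-x)/x)).
  { replace (q * ((y-x)/(1-x)) - p * ((y-x)/x)) with ((y-x)/(x*(1-x)) * ((p+q)*x - p)) by (field; lra).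
    apply Rmult_le_pos; auto. apply Rdiv_le_0_compat. lra. apply Rmult_lt_0_compat; lra. }
  assert (p * (ln y - ln x) <= p * ((y-x)/x)) by (apply Rmult_le_compat_l; auto).
  assert (q * ((y-x)/(1-x)) <= q * (ln (1-x) - ln (1-y))) by (apply Rmult_le_compat_l; auto).
  lra.
Qed.

Lemma int_upper (h : R -> R) u v K : u <= v -> ex_RInt h u v ->
  (forall x, u < x < v -> h x <= K) -> RInt h u v <= (v - u) * K.
Proof.
  intros. rewrite <- rc. apply RInt_le; auto. apply ex_RInt_const.
Qed.

Lemma int_lower (h : R -> R) u v K : u <= v -> ex_RInt h u v ->
  (forall x, u < x < v -> K <= h x) -> (v - u) * K <= RInt h u v.
Proof.
  intros. rewrite <- rc. apply RInt_le; auto. apply ex_RInt_const.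
Qed.

Lemma large_case ups a b c d eta : 0 < ups -> ups <= c -> d <= 1 - ups -> 0 < eta ->
  c + eta <= d - eta ->
  0 <= (a-1) + (b-1) ->
  0 <= (a-1) - ((a-1)+(b-1)) * (c+eta) ->
  0 <= ((a-1)+(b-1)) * (d-eta) - (a-1) ->
  eta / (1 + eta) <= trunc_beta_mass ups a b c d.
Proof.
  intros Hu Hc Hd He Hcd Hpq Hl Hr.
  set (p := a-1) in *. set (q := b-1) in *.
  set (f := beta_density a b).
  assert (Hp : 0 <= p) by nra.
  assert (Hq : 0 <= q) by nra.
  set (c1 := c + eta) in *. set (d1 := d - eta) in *.
  assert (Hc1 : c1 = c + eta) by reflexivity. assert (Hd1 : d1 = d - eta) by reflexivity.
  assert (Hinc : forall x y, ups <= x -> x <= y -> y <= c1 -> f x <= f y).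
  { intros x y H1 H2 H3. unfold f. rewrite !f_exp. apply exp_mono.
    fold p q. apply g_incr; try lra. pose proof (Rmult_le_compat_l (p+q) y c1 Hpq H3). lra. }
  assert (Hdec : forall x y, d1 <= x -> x <= y -> y <= 1 - ups -> f y <= f x).
  { intros x y H1 H2 H3. unfold f. rewrite !f_exp. apply exp_mono.
    fold p q. apply g_decr; try lra. pose proof (Rmult_le_compat_l (p+q) d1 x Hpq H1). lra. }
  assert (I : forall u v, ups <= u -> u <= v -> v <= 1 - ups -> ex_RInt f u v).
  { intros; apply f_int; lra. }
  assert (Hfc : 0 < f c) by (apply f_pos; lra).
  assert (Hfd : 0 < f d) by (apply f_pos; lra).
  assert (EL : RInt f ups c <= (c - ups) * f c).
  { apply int_upper; auto. apply I; lra. intros; apply Hinc; lra. }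
  assert (E1 : (c1 - c) * f c <= RInt f c c1).
  { apply int_lower; auto. lra. apply I; lra. intros; apply Hinc; lra. }
  assert (ER : RInt f d (1-ups) <= (1 - ups - d) * f d).
  { apply int_upper; auto. apply I; lra. intros; apply Hdec; lra. }
  assert (E2 : (d - d1) * f d <= RInt f d1 d).
  { apply int_lower; auto. lra. apply I; lra. intros; apply Hdec; lra. }
  assert (Em : 0 <= RInt f c1 d1).
  { apply RInt_ge_0. lra. apply I; lra. intros; left; apply f_pos; lra. }
  assert (Chd : RInt f c d = RInt f c c1 + RInt f c1 d1 + RInt f d1 d).
  { rewrite (chas f c d1 d) by (apply I; lra). rewrite (chas f c c1 d1) by (apply I; lra). lra. }
  assert (Cht : RInt f ups (1-ups) = RInt f ups c + RInt f c d + RInt f d (1-ups)).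
  { rewrite (chas f ups d (1-ups)) by (apply I; lra). rewrite (chas f ups c d) by (apply I; lra). lra. }
  assert (HL : eta * RInt f ups c <= RInt f c c1).
  { replace (c1 - c) with eta in E1 by lra.
    assert (RInt f ups c <= f c). { assert ((c - ups) * f c <= 1 * f c) by (apply Rmult_le_compat_r; lra). lra. }
    assert (eta * RInt f ups c <= eta * f c) by (apply Rmult_le_compat_l; lra). lra. }
  assert (HR : eta * RInt f d (1-ups) <= RInt f d1 d).
  { replace (d - d1) with eta in E2 by lra.
    assert (RInt f d (1-ups) <= f d). { assert ((1 - ups - d) * f d <= 1 * f d) by (apply Rmult_le_compat_r; lra). lra. }
    assert (eta * RInt f d (1-ups) <= eta * f d) by (apply Rmult_le_compat_l; lra). lra. }
  assert (HL0 : 0 <= RInt f ups c) by (apply RInt_ge_0; [lra|apply I; lra|intros; left; apply f_pos; lra]).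
  assert (HR0 : 0 <= RInt f d (1-ups)) by (apply RInt_ge_0; [lra|apply I; lra|intros; left; apply f_pos; lra]).
  assert (HA : 0 < RInt f c d).
  { apply RInt_gt_0. lra. intros; apply f_pos; lra. intros; apply f_cont; lra. }
  unfold trunc_beta_mass. fold f.
  set (A := RInt f c d) in *. set (T := RInt f ups (1-ups)) in *.
  assert (HT : 0 < T) by lra.
  assert (eta * T <= (1 + eta) * A).
  { rewrite Cht. lra. }
  apply Rmult_le_reg_r with ((1+eta) * T). nra.
  replace (eta / (1 + eta) * ((1 + eta) * T)) with (eta * T) by (field; lra).
  replace (A / T * ((1 + eta) * T)) with ((1+eta) * A) by (field; lra). auto.
Qed.

Lemma fin_min (P : nat -> R) : (forall m, (1 <= m)%nat -> 0 < P m) ->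
  forall M, exists delta, 0 < delta /\ forall m, (1 <= m)%nat -> (m < M)%nat -> delta <= P m.
Proof.
  intros HP M. induction M as [|M [dl [Hd Hm]]].
  - exists 1. split. lra. intros. lia.
  - destruct (Nat.eq_dec M 0) as [->|HM].
    + exists 1. split. lra. intros. lia.
    + exists (Rmin dl (P M)). split.
      * apply Rmin_glb_lt; auto. apply HP. lia.
      * intros m H1 H2. destruct (Nat.eq_dec m M) as [->|].
        apply Rmin_r. apply Rle_trans with dl. apply Rmin_l. apply Hm; lia.
Qed.

Lemma mass_pos ups a b c d : 0 < ups -> ups <= c -> c < d -> d <= 1 - ups ->
  0 < trunc_beta_mass ups a b c d.
Proof.
  intros. unfold trunc_beta_mass. apply Rdiv_lt_0_compat;
  (apply RInt_gt_0; [lra | intros; apply f_pos; lra | intros; apply f_cont; lra]).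
Qed.

Lemma ln_sqrt_bound x : 0 < x -> ln x <= 2 * sqrt x.
Proof.
  intros. pose proof (sqrt_lt_R0 x H). pose proof (sqrt_def x (Rlt_le _ _ H)).
  rewrite <- H1 at 1. rewrite ln_mult by auto. pose proof (ln_le1 _ H0). lra.
Qed.

Theorem lemma9 (ups theta c d : R) (alpha beta : nat -> R) :
  0 < ups < 1 / 2 ->
  (forall m : nat, (1 <= m)%nat ->
     0 < alpha m /\ 0 < beta m /\ alpha m + beta m = INR m) ->
  ups <= c -> d <= 1 - ups -> c < theta < d ->
  (forall eps : R, 0 < eps -> exists N : nat, forall m : nat, (N <= m)%nat ->
     Rabs (alpha m / INR m - theta) * sqrt (INR m) <= eps * ln (INR m)) ->
  exists delta : R, 0 < delta /\
    forall m : nat, (1 <= m)%nat -> delta <= trunc_beta_mass ups (alpha m) (beta m) c d.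
Proof.
  intros Hu Hab Hc Hd Ht Hlim.
  set (eta := Rmin (theta - c) (d - theta) / 2).
  assert (He1 : 2 * eta <= theta - c) by (unfold eta; pose proof (Rmin_l (theta - c) (d - theta)); lra).
  assert (He2 : 2 * eta <= d - theta) by (unfold eta; pose proof (Rmin_r (theta - c) (d - theta)); lra).
  assert (He : 0 < eta).
  { unfold eta. assert (0 < Rmin (theta - c) (d - theta)) by (apply Rmin_glb_lt; lra). lra. }
  destruct (archimed_cor1 (eta / 2)) as [K [HK1 HK2]]. lra.
  assert (HKpos : 0 < INR K) by (apply lt_0_INR; lia).
  assert (HKe : 1 < INR K * (eta / 2)).
  { apply Rmult_lt_compat_l with (r := INR K) in HK1; auto.
    rewrite Rinv_r in HK1 by lra. lra. }
  destruct (Hlim (eta / 4)) as [N HN]. lra.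
  set (M := Nat.max N (Nat.max K 2)).
  destruct (fin_min (fun m => trunc_beta_mass ups (alpha m) (beta m) c d)) with (M := M) as [ds [Hds Hsm]].
  { intros m Hm. apply mass_pos; lra. }
  exists (Rmin ds (eta / (1 + eta))). split.
  { apply Rmin_glb_lt; auto. apply Rdiv_lt_0_compat; lra. }
  intros m Hm. destruct (Nat.lt_ge_cases m M) as [Hlt|Hge].
  { apply Rle_trans with ds. apply Rmin_l. apply Hsm; auto. }
  apply Rle_trans with (eta / (1 + eta)). apply Rmin_r.
  destruct (Hab m Hm) as [Ha [Hb Hsum]].
  assert (HmN : (N <= m)%nat) by lia.
  assert (HmK : INR K <= INR m) by (apply le_INR; lia).
  assert (Hm2 : 2 <= INR m) by (replace 2 with (INR 2) by (simpl; lra); apply le_INR; lia).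
  set (x := INR m) in *.
  assert (Hxe : 1 <= x * (eta / 2)).
  { assert (INR K * (eta/2) <= x * (eta/2)) by (apply Rmult_le_compat_r; lra). lra. }
  assert (Hsq : 0 < sqrt x) by (apply sqrt_lt_R0; lra).
  assert (Habs : Rabs (alpha m / x - theta) <= eta / 2).
  { pose proof (HN m HmN) as H1. fold x in H1. pose proof (ln_sqrt_bound x ltac:(lra)).
    assert (eta / 4 * ln x <= eta / 4 * (2 * sqrt x)) by (apply Rmult_le_compat_l; lra).
    apply Rmult_le_reg_r with (sqrt x); auto. lra. }
  assert (Hal : alpha m = (alpha m / x) * x) by (field; lra).
  apply Rabs_le_between in Habs.
  assert (Hlo : x * theta - x * (eta/2) <= alpha m).
  { rewrite Hal. assert ((theta - eta/2) * x <= (alpha m / x) * x) by (apply Rmult_le_compat_r; lra). lra. }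
  assert (Hhi : alpha m <= x * theta + x * (eta/2)).
  { rewrite Hal. assert ((alpha m / x) * x <= (theta + eta/2) * x) by (apply Rmult_le_compat_r; lra). lra. }
  assert (P1 : 0 <= x * (theta - c - 2 * eta)) by (apply Rmult_le_pos; lra).
  assert (P2 : 0 <= x * (d - theta - 2 * eta)) by (apply Rmult_le_pos; lra).
  apply large_case; try lra.
  - replace (alpha m - 1 + (beta m - 1)) with (x - 2) by lra. nra.
  - replace (alpha m - 1 + (beta m - 1)) with (x - 2) by lra. nra.
Qed.
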